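(* Let $D$ and $V$ be one-dimensional Noetherian local integral domains with common quotient field $L$, and set $R=D\cap V$. Suppose: (a) $V$ is a discrete rank one valuation ring of $L$; (b) there is a prime element $\pi$ of $V$ that is also a prime element of $R$; (c) for every maximal ideal $N$ of the integral closure $\overline D$ of $D$, the valuation ring $\overline D_N$ is independent of $V$; (d) $D$ is not a unique factorization domain; (e) there are at least two non-associated irreducible elements of $D$ that are also irreducible in $R$. Then $R$ is a one-dimensional Noetherian integral domain (in particular atomic) with exactly two maximal ideals, $\pi$ is, up to associates in $R$, the unique prime element of $R$, $R$ has irreducible elements not associated to $\pi$, and none of these is absolutely irreducible.
   Context: Two valuation rings $V_1,V_2$ of a field $L$ are independent if the only valuation ring of $L$ containing both $V_1$ and $V_2$ is $L$ itself. Factorization notions for a domain refer to its monoid of non-zero elements. Two factorizations into irreducibles $a_1\cdots a_n=b_1\cdots b_m$ of the same element are essentially the same if $n=m$ and, after re-indexing, $a_j$ and $b_j$ are associated for all $j$. An irreducible $r$ is absolutely irreducible if for every $n\in\mathbb N$, every factorization of $r^n$ into irreducibles is essentially the same as $r^n=r\cdots r$. *)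

(* Defs.v *)
From HB Require Import structures.
From mathcomp Require Import all_boot all_order all_algebra.
Set Implicit Arguments. Unset Strict Implicit. Unset Printing Implicit Defensive.
Import Order.TTheory GRing.Theory Num.Theory.
Local Open Scope ring_scope.

(* Subsets of a field L are represented as predicates [L -> Prop].
   All rings considered are subrings of the fixed field L (hence domains). *)

Section Defs.
Variable L : fieldType.
Implicit Types (A I J P M N W : L -> Prop) (x y a b : L).

Definition subring A : Prop :=
  [/\ A 0, A 1, (forall x y, A x -> A y -> A (x - y)) &
      (forall x y, A x -> A y -> A (x * y))].

Definition quotient_field_is A : Prop :=
  forall x, exists a b, [/\ A a, A b, b != 0 & x = a / b].

Definition ideal A I : Prop :=
  [/\ (forall x, I x -> A x), I 0, (forall x y, I x -> I y -> I (x + y)) &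
      (forall r x, A r -> I x -> I (r * x))].

Definition proper_ideal A I : Prop := ideal A I /\ ~ I 1.

Definition prime_ideal A P : Prop :=
  proper_ideal A P /\ forall a b, A a -> A b -> P (a * b) -> P a \/ P b.

Definition maximal_ideal A M : Prop :=
  proper_ideal A M /\
  forall J, proper_ideal A J -> (forall x, M x -> J x) -> forall x, J x -> M x.

Definition same_set (I J : L -> Prop) : Prop := forall x, I x <-> J x.

Definition generated_by A (s : seq L) (I : L -> Prop) : Prop :=
  forall x, I x <-> exists c : seq L,
    [/\ size c = size s, (forall i, (i < size c)%N -> A c`_i) &
        x = \sum_(i < size s) c`_i * s`_i].

Definition noetherian A : Prop :=
  forall I, ideal A I -> exists s : seq L,
    (forall i, (i < size s)%N -> A s`_i) /\ generated_by A s I.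

Definition local_ring A : Prop :=
  exists M, maximal_ideal A M /\ forall M', maximal_ideal A M' -> same_set M' M.

Definition dim_one A : Prop :=
  (exists P, prime_ideal A P /\ exists x, P x /\ x != 0) /\
  (forall P, prime_ideal A P -> (exists x, P x /\ x != 0) -> maximal_ideal A P).

Definition valuation_ring W : Prop :=
  subring W /\ forall x, x != 0 -> W x \/ W x^-1.

Definition DVR_of V : Prop :=
  exists v : L -> int,
  [/\ (forall x y, x != 0 -> y != 0 -> v (x * y) = v x + v y),
      (forall x y, x != 0 -> y != 0 -> x + y != 0 ->
                   Num.min (v x) (v y) <= v (x + y)),
      (forall n : int, exists x, x != 0 /\ v x = n) &
      (forall x, V x <-> (x = 0 \/ (x != 0 /\ 0 <= v x)))].

Definition independent V1 V2 : Prop :=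
  forall W, valuation_ring W -> (forall x, V1 x -> W x) ->
            (forall x, V2 x -> W x) -> forall x, W x.

Definition int_closure A : L -> Prop :=
  fun x => exists p : {poly L}, [/\ p \is monic, (forall i, A p`_i) & root p x].

Definition localization A N : L -> Prop :=
  fun x => exists a b, [/\ A a, A b, ~ N b & x = a / b].

Definition unit_in A x : Prop := [/\ A x, x != 0 & A x^-1].

Definition assoc_in A x y : Prop := exists u, unit_in A u /\ x = u * y.

Definition divides_in A a b : Prop := exists c, A c /\ b = a * c.

Definition prime_elt A p : Prop :=
  [/\ A p, p != 0, ~ unit_in A p &
      forall a b, A a -> A b -> divides_in A p (a * b) ->
                  divides_in A p a \/ divides_in A p b].

Definition irreducible_in A r : Prop :=
  [/\ A r, r != 0, ~ unit_in A r &
      forall a b, A a -> A b -> r = a * b -> unit_in A a \/ unit_in A b].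

Definition factorization A (s : seq L) x : Prop :=
  (forall i, (i < size s)%N -> irreducible_in A s`_i) /\ \prod_(y <- s) y = x.

Definition ess_same A (s t : seq L) : Prop :=
  size s = size t /\
  exists t' : seq L, perm_eq t t' /\
    forall i, (i < size s)%N -> assoc_in A s`_i t'`_i.

Definition atomic A : Prop :=
  forall x, A x -> x != 0 -> ~ unit_in A x -> exists s, factorization A s x.

Definition UFD A : Prop :=
  atomic A /\
  forall s t x, factorization A s x -> factorization A t x -> ess_same A s t.

Definition abs_irreducible A r : Prop :=
  irreducible_in A r /\
  forall (n : nat) (s : seq L), factorization A s (r ^+ n) -> ess_same A s (nseq n r).

Definition capS (D V : L -> Prop) : L -> Prop := fun x => D x /\ V x.

End Defs.

(* Main.v *)
Require Import Defs.
From HB Require Import structures.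
From mathcomp Require Import all_boot all_order all_algebra.
From Stdlib Require Import Classical ClassicalEpsilon.
From mathcomp Require Import zify ring.
Import Order.TTheory GRing.Theory Num.Theory.
Local Open Scope ring_scope.
Set Implicit Arguments. Unset Strict Implicit.

Section Gen.
Variable L : fieldType.
Implicit Types (A I J : L -> Prop) (x y : L).

Lemma sr0 A : subring A -> A 0. Proof. by case. Qed.
Lemma sr1 A : subring A -> A 1. Proof. by case. Qed.
Lemma srB A x y : subring A -> A x -> A y -> A (x - y). Proof. by case=> _ _ h _; apply: h. Qed.
Lemma srM A x y : subring A -> A x -> A y -> A (x * y). Proof. by case=> _ _ _ h; apply: h. Qed.
Lemma srN A x : subring A -> A x -> A (- x).
Proof. by move=> s h; rewrite -sub0r; apply: srB => //; apply: sr0. Qed.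
Lemma srD A x y : subring A -> A x -> A y -> A (x + y).
Proof. by move=> s hx hy; rewrite -[y]opprK; apply: srB => //; apply: srN. Qed.
Lemma srX A x n : subring A -> A x -> A (x ^+ n).
Proof. move=> s hx; elim: n => [|n IH]; first by rewrite expr0; apply: sr1.
by rewrite exprS; apply: srM. Qed.
Lemma sr_nat A n : subring A -> A n%:R.
Proof. move=> s; elim: n => [|n IH]; first exact: sr0.
by rewrite -addn1 natrD; apply: srD => //; apply: sr1. Qed.

Lemma id_sub A I x : ideal A I -> I x -> A x. Proof. by case=> h _ _ _; apply: h. Qed.
Lemma id0 A I : ideal A I -> I 0. Proof. by case. Qed.
Lemma idD A I x y : ideal A I -> I x -> I y -> I (x + y). Proof. by case=> _ _ h _; apply: h. Qed.
Lemma idM A I r x : ideal A I -> A r -> I x -> I (r * x). Proof. by case=> _ _ _ h; apply: h. Qed.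
Lemma idMr A I r x : ideal A I -> A r -> I x -> I (x * r). Proof. by move=> h1 h2 h3; rewrite mulrC; apply: idM h1 h2 h3. Qed.

Lemma id_sum A I n (c s : seq L) : ideal A I ->
  (forall i, (i < n)%N -> A c`_i) -> (forall i, (i < n)%N -> I s`_i) ->
  I (\sum_(i < n) c`_i * s`_i).
Proof.
move=> hI hc hs; apply: (big_ind I); first exact: id0 hI.
  by move=> x y hx hy; apply: idD hI hx hy.
by move=> i _; apply: idM hI (hc _ (ltn_ord i)) (hs _ (ltn_ord i)).
Qed.

Lemma bound_nat (P : nat -> nat -> Prop) k :
  (forall n m i, (n <= m)%N -> P n i -> P m i) ->
  (forall i, (i < k)%N -> exists n, P n i) -> exists N, forall i, (i < k)%N -> P N i.
Proof.
move=> mono; elim: k => [|k IH] h; first by exists 0%N.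
have [N HN] : exists N, forall i, (i < k)%N -> P N i.
  by apply: IH => i hi; apply: h; apply: ltnW.
have [n Hn] := h k (ltnSn k).
exists (maxn N n) => i; rewrite ltnS leq_eqVlt => /orP [/eqP -> | hi].
  by apply: mono Hn; apply: leq_maxr.
by apply: mono (HN i hi); apply: leq_maxl.
Qed.

Lemma gen_mem A (s : seq L) I i : subring A -> generated_by A s I -> (i < size s)%N -> I s`_i.
Proof.
move=> sA hg hi; apply/hg; exists (mkseq (fun j => (j == i)%:R) (size s)); split.
- by rewrite size_mkseq.
- by move=> j; rewrite size_mkseq => hj; rewrite nth_mkseq //; apply: sr_nat.
rewrite (bigD1 (Ordinal hi)) //= nth_mkseq // eqxx mul1r big1 ?addr0 //.
move=> j hj; rewrite nth_mkseq ?ltn_ord //.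
have : (nat_of_ord j != i) by move: hj; apply: contra => /eqP h; apply/eqP/val_inj.
by move/negbTE => ->; rewrite mul0r.
Qed.

Lemma noeth_max A (F : (L -> Prop) -> Prop) : subring A -> noetherian A ->
  (forall I, F I -> ideal A I) -> (exists I, F I) ->
  exists I, F I /\ forall J, F J -> (forall x, I x -> J x) -> forall x, J x -> I x.
Proof.
move=> sA nA hF [I0 HI0].
apply: NNPP => Hn.
have step : forall I, exists J, F I -> F J /\ (forall x, I x -> J x) /\ exists y, J y /\ ~ I y.
  move=> I; case: (classic (F I)) => FI; last by exists I.
  apply: NNPP => H1; apply: Hn; exists I; split=> // J FJ IJ x Jx.
  apply: NNPP => nIx; apply: H1; exists J => _; split=> //; split=> //; by exists x.
pose g I := proj1_sig (constructive_indefinite_description _ (step I)).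
have gP I : F I -> F (g I) /\ (forall x, I x -> g I x) /\ exists y, g I y /\ ~ I y.
  by rewrite /g; case: constructive_indefinite_description.
pose c n := iter n g I0.
have Fc n : F (c n) by elim: n => [|n IH] //=; case: (gP _ IH).
have mono n m x : (n <= m)%N -> c n x -> c m x.
  elim: m => [|m IH]; first by rewrite leqn0 => /eqP ->.
  rewrite leq_eqVlt => /orP [/eqP -> //| ]; rewrite ltnS => h cx.
  by case: (gP _ (Fc m)) => _ [+ _]; apply; apply: IH.
pose U x := exists n, c n x.
have iU : ideal A U.
  split.
  - by move=> x [n h]; apply: id_sub (hF _ (Fc n)) h.
  - by exists 0%N; apply: id0 (hF _ (Fc 0%N)).
  - move=> x y [n hx] [m hy]; exists (maxn n m); apply: idD (hF _ (Fc _)) _ _.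
      by apply: mono hx; apply: leq_maxl.
    by apply: mono hy; apply: leq_maxr.
  - by move=> r x hr [n hx]; exists n; apply: idM (hF _ (Fc n)) hr hx.
have [s [hs hg]] := nA U iU.
have [N HN] : exists N, forall i, (i < size s)%N -> c N s`_i.
  apply: (@bound_nat (fun n i => c n s`_i)); first by move=> n m i; apply: mono.
  by move=> i hi; apply: gen_mem hg hi.
have UN x : U x -> c N x.
  move/hg => [cs [hsz hc ->]]; apply: id_sum (hF _ (Fc N)) _ _ => i hi.
    by apply: hc; rewrite hsz.
  by apply: HN.
case: (gP _ (Fc N)) => _ [_ [y [hy nhy]]]; apply: nhy; apply: UN; by exists N.+1.
Qed.

End Gen.

Set Default Proof Using "All".
Section Main.
Variable L : fieldType.
Variables (D V : L -> Prop) (pi : L) (v : L -> int) (M : L -> Prop).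
Hypothesis sD : subring D.
Hypothesis sV : subring V.
Hypothesis qD : quotient_field_is D.
Hypothesis nD : noetherian D.
Hypothesis Mmax : maximal_ideal D M.
Hypothesis Muniq : forall M', maximal_ideal D M' -> same_set M' M.
Hypothesis dD : dim_one D.
Hypothesis vM : forall x y, x != 0 -> y != 0 -> v (x * y) = v x + v y.
Hypothesis vA : forall x y, x != 0 -> y != 0 -> x + y != 0 ->
                   Num.min (v x) (v y) <= v (x + y).
Hypothesis vS : forall n : int, exists x, x != 0 /\ v x = n.
Hypothesis Vv : forall x, V x <-> (x = 0 \/ (x != 0 /\ 0 <= v x)).
Hypothesis pV : prime_elt V pi.
Hypothesis pR : prime_elt (capS D V) pi.
Hypothesis nU : ~ UFD D.

Local Notation R := (capS D V).
Implicit Types (x y z a b c d : L).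

Lemma v1 : v 1 = 0.
Proof. have h : v 1 = v 1 + v 1 by rewrite -vM ?oner_neq0 // mulr1.
lia. Qed.

Lemma vV x : x != 0 -> v x^-1 = - v x.
Proof.
move=> hx; have hi : x^-1 != 0 by rewrite invr_eq0.
have := vM hx hi; rewrite mulfV // v1 => h; lia.
Qed.

Lemma vNeg1 : v (-1) = 0.
Proof.
have h1 : (-1 : L) != 0 by rewrite oppr_eq0 oner_neq0.
have := vM h1 h1; rewrite mulrNN mulr1 v1 => h; lia.
Qed.

Lemma vN x : x != 0 -> v (- x) = v x.
Proof.
move=> hx; have h1 : (-1 : L) != 0 by rewrite oppr_eq0 oner_neq0.
by rewrite -mulN1r vM // vNeg1 add0r.
Qed.

Lemma vX x n : x != 0 -> v (x ^+ n) = v x * n%:Z.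
Proof.
move=> hx; elim: n => [|n IH]; first by rewrite expr0 v1 mulr0.
rewrite exprS vM ?expf_neq0 // IH; lia.
Qed.

Lemma vDiv x y : x != 0 -> y != 0 -> v (x / y) = v x - v y.
Proof. by move=> hx hy; rewrite vM ?invr_eq0 // vV. Qed.

Lemma vstrict x y : x != 0 -> y != 0 -> v x < v y -> x + y != 0 /\ v (x + y) = v x.
Proof.
move=> hx hy hlt.
have hxy : x + y != 0.
  apply/negP => /eqP h; have : y = - x by apply/eqP; rewrite -addr_eq0 addrC h.
  by move=> e; move: hlt; rewrite e vN // ltxx.
split=> //.
have h1 := vA hx hy hxy.
have hmy : - y != 0 by rewrite oppr_eq0.
have h2 := vA hxy hmy; rewrite addrK vN // in h2; have {h2} h2 := h2 hx.
move: h1 h2; rewrite !ge_min; set p := v (x + y); set q := v x; set r := v y => /orP [h1|h1] /orP [h2|h2]; lia.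
Qed.

Lemma Vnz x : x != 0 -> V x <-> 0 <= v x.
Proof.
move=> hx; rewrite Vv; split; first by case=> [e|[]//]; move: hx; rewrite e eqxx.
by move=> h; right.
Qed.

Lemma sR : subring R.
Proof.
split.
- by split; [apply: sr0 sD | apply: sr0 sV].
- by split; [apply: sr1 sD | apply: sr1 sV].
- by move=> x y [h1 h2] [h3 h4]; split; [apply: srB | apply: srB].
- by move=> x y [h1 h2] [h3 h4]; split; [apply: srM | apply: srM].
Qed.

Definition pid (A : L -> Prop) x : L -> Prop := fun y => exists d, A d /\ y = x * d.

Lemma pid_ideal A x : subring A -> A x -> ideal A (pid A x).
Proof.
move=> sA hx; split.
- by move=> y [d [hd ->]]; apply: srM.
- by exists 0; split; [apply: sr0 | rewrite mulr0].
- by move=> y z [d [hd ->]] [e [he ->]]; exists (d + e); split; [apply: srD | rewrite mulrDr].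
- by move=> r y hr [d [hd ->]]; exists (r * d); split; [apply: srM | rewrite mulrCA].
Qed.

Lemma pid_self A x : subring A -> pid A x x.
Proof. by move=> sA; exists 1; split; [apply: sr1 | rewrite mulr1]. Qed.

Lemma Mid : ideal D M. Proof. by case: Mmax => [[]]. Qed.
Lemma M1 : ~ M 1. Proof. by case: Mmax => [[]]. Qed.
Lemma MD x : M x -> D x. Proof. exact: id_sub Mid. Qed.

Lemma unit_notM x : unit_in D x -> ~ M x.
Proof.
case=> hx hx0 hxi hM; apply: M1; rewrite -(mulVf hx0); exact: idM Mid hxi hM.
Qed.

Lemma notM_unit x : D x -> ~ M x -> unit_in D x.
Proof.
move=> hx hM; apply: NNPP => hu.
pose F := fun I => [/\ ideal D I, I x & ~ I 1].
have [I [[hI hIx hI1] hmax]] : exists I, F I /\ forall J, F J -> (forall y, I y -> J y) -> forall y, J y -> I y.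
  apply: noeth_max sD nD _ _; first by move=> I [].
  exists (pid D x); split; [exact: pid_ideal | exact: pid_self |].
  move=> [d [hd e]]; apply: hu; have hx0 : x != 0 by apply/negP => /eqP h; move: e; rewrite h mul0r; apply/eqP; rewrite oner_neq0.
  by split=> //; rewrite (_ : x^-1 = d) //; apply: (mulfI hx0); rewrite mulfV // -e.
have mI : maximal_ideal D I.
  split; first by split.
  by move=> J [hJ hJ1] sub y Jy; apply: (hmax J) => //; split => //; apply: sub.
by apply: hM; apply/(Muniq mI).
Qed.

Lemma M0 : M 0. Proof. exact: id0 Mid. Qed.

Lemma prime_max P : prime_ideal D P -> (exists x, P x /\ x != 0) -> same_set P M.
Proof. by move=> hP hnz; apply: Muniq; case: dD => _; apply. Qed.

Lemma Mnz : exists m, M m /\ m != 0.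
Proof.
case: dD => [[P [hP [x [hx hx0]]]] _].
by exists x; split=> //; apply/(prime_max hP); [exists x|].
Qed.

Lemma piD : D pi. Proof. by case: pR => [[]]. Qed.
Lemma piV : V pi. Proof. by case: pR => [[]]. Qed.
Lemma pi0 : pi != 0. Proof. by case: pR. Qed.

Lemma vpi : v pi = 1.
Proof.
case: pV => hV _ hnu hpr.
have h0 : 0 <= v pi by apply/(Vnz pi0).
have h1 : v pi != 0.
  apply/negP => /eqP e; apply: hnu; split=> //; first exact: pi0.
  by apply/(Vnz _); rewrite ?invr_eq0 ?pi0 // vV ?pi0 // e.
have [u [hu0 hu]] := vS 1.
suff : v pi <= 1 by lia.
rewrite leNgt; apply/negP => h2.
have hq0 : pi / u != 0 by rewrite mulf_neq0 ?invr_eq0 ?pi0.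
have hvq : v (pi / u) = v pi - 1 by rewrite vDiv ?pi0 // hu.
have hVu : V u by apply/(Vnz hu0); rewrite hu.
have hVq : V (pi / u) by apply/(Vnz hq0); rewrite hvq; lia.
have : divides_in V pi (u * (pi / u)).
  by exists 1; split; [apply: sr1 sV | rewrite mulr1 mulrCA mulfV // mulr1].
case/(hpr _ _ hVu hVq) => [[c [hc e]] | [c [hc e]]].
  have hc0 : c != 0 by apply/negP => /eqP h; move: hu0; rewrite e h mulr0 eqxx.
  have := vM pi0 hc0; rewrite -e hu; move/(Vnz hc0): hc => hc; lia.
have hc0 : c != 0 by apply/negP => /eqP h; move: hq0; rewrite e h mulr0 eqxx.
have := vM pi0 hc0; rewrite -e hvq; move/(Vnz hc0): hc => hc; lia.
Qed.

Lemma unit1 (A : L -> Prop) : subring A -> unit_in A 1.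
Proof. by move=> sA; split; rewrite ?invr1 ?oner_neq0 //; apply: sr1. Qed.

Lemma unitM (A : L -> Prop) x y : subring A -> unit_in A x -> unit_in A y -> unit_in A (x * y).
Proof.
move=> sA [h1 h2 h3] [h4 h5 h6]; split; [exact: srM | by rewrite mulf_neq0 |].
by rewrite invfM; apply: srM.
Qed.

Lemma unitV (A : L -> Prop) x : unit_in A x -> unit_in A x^-1.
Proof. by case=> h1 h2 h3; split; rewrite ?invrK ?invr_eq0. Qed.

Lemma prod_nseq k x : \prod_(y <- nseq k x) y = x ^+ k.
Proof. by elim: k => [|k IH]; rewrite ?big_nil ?expr0 // big_cons IH exprS. Qed.

Section UFDp.
Variable p : L.
Hypothesis pD : D p.
Hypothesis p0 : p != 0.
Hypothesis Mp : same_set M (pid D p).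

Lemma pM : M p. Proof. by apply/Mp; apply: pid_self. Qed.

Lemma pXM n : (0 < n)%N -> M (p ^+ n).
Proof. by case: n => // n _; rewrite exprS; apply: idMr Mid (srX _ sD pD) pM. Qed.

Lemma expo_dec d : D d -> d != 0 -> exists u n, unit_in D u /\ d = u * p ^+ n.
Proof.
move=> hd hd0.
pose F := fun I => exists y n, [/\ D y, d = y * p ^+ n & I = pid D y].
have [I [[y [n [hy e eI]]] hmax]] : exists I, F I /\ forall J, F J -> (forall x, I x -> J x) -> forall x, J x -> I x.
  apply: noeth_max sD nD _ _.
    by move=> I [y [n [hy _ ->]]]; apply: pid_ideal.
  by exists (pid D d), d, 0%N; rewrite expr0 mulr1.
subst I.
have hy0 : y != 0 by apply/negP => /eqP h; move: hd0; rewrite e h mul0r eqxx.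
case: (classic (M y)) => hMy; last by exists y, n; split=> //; apply: notM_unit.
case/Mp: hMy => y' [hy' ey].
have FJ : F (pid D y') by exists y', n.+1; split=> //; rewrite e ey exprSr; ring.
have sub : forall x, pid D y x -> pid D y' x.
  by move=> x [c [hc ->]]; exists (p * c); split; [apply: srM | rewrite ey mulrCA mulrA (mulrC p)].
have [c [hc ey']] := hmax _ FJ sub y' (pid_self _ sD).
exfalso; apply: M1.
have : p * c = 1.
  have E : y = y * (p * c) by rewrite {1}ey ey'; ring.
  by apply: (mulfI hy0); rewrite mulr1 -E.
by move<-; apply: idMr Mid hc pM.
Qed.

Lemma expo_uniq u u' m n : unit_in D u -> unit_in D u' -> u * p ^+ m = u' * p ^+ n -> m = n.
Proof.
wlog : u u' m n / (m <= n)%N.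
  move=> W hu hu' e; case: (leqP m n) => h; first exact: W hu hu' e.
  by symmetry; apply: W hu' hu _ => //; apply: ltnW.
move=> hmn hu [hu'1 hu'0 hu'2] e.
apply/eqP; rewrite eqn_leq hmn /=; rewrite leqNgt; apply/negP => hlt.
apply: (unit_notM hu).
have hpm : p ^+ m != 0 by rewrite expf_neq0.
have : u = u' * p ^+ (n - m).
  apply: (mulIf hpm); rewrite e -mulrA -exprD subnK //.
by move->; apply: idM Mid hu'1 (pXM _); rewrite subn_gt0.
Qed.

Lemma irr_form x : irreducible_in D x -> exists u, unit_in D u /\ x = u * p.
Proof.
case=> hx hx0 hxu hirr.
have [u [n [hu e]]] := expo_dec hx hx0.
case: n e => [|n] e.
  by exfalso; apply: hxu; rewrite e expr0 mulr1.
case: n e => [|n] e; first by exists u; rewrite e expr1.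
exfalso.
have e2 : x = (u * p) * p ^+ n.+1 by rewrite e !exprS; ring.
have hup : D (u * p) by apply: srM => //; case: hu.
case: (hirr _ _ hup (srX _ sD pD) e2) => /unit_notM; apply.
  by apply: idM Mid _ pM; case: hu.
by apply: pXM.
Qed.

Lemma irr_up u : unit_in D u -> irreducible_in D (u * p).
Proof.
move=> hu; have [hu1 hu0 hu2] := hu.
split.
- exact: srM.
- by rewrite mulf_neq0.
- by move/unit_notM; apply; apply: idM Mid hu1 pM.
move=> a b ha hb e.
have ha0 : a != 0 by apply/negP => /eqP h; move: e; rewrite h mul0r; apply/eqP; rewrite mulf_neq0.
have hb0 : b != 0 by apply/negP => /eqP h; move: e; rewrite h mulr0; apply/eqP; rewrite mulf_neq0.
have [ua [i [hua ea]]] := expo_dec ha ha0.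
have [ub [j [hub eb]]] := expo_dec hb hb0.
have : u * p ^+ 1 = (ua * ub) * p ^+ (i + j).
  by rewrite expr1 e ea eb exprD; rewrite -!mulrA; congr (_ * _); rewrite mulrCA.
move/(expo_uniq hu (unitM sD hua hub)).
case: i ea => [|i] ea; first by left; rewrite ea expr0 mulr1.
case: j eb => [|j] eb; first by right; rewrite eb expr0 mulr1.
by rewrite addSn addnS.
Qed.

Lemma fact_form s x : factorization D s x -> exists u, unit_in D u /\ x = u * p ^+ size s.
Proof.
elim: s x => [|y s IH] x [hs e].
  by exists 1; split; [apply: unit1 | rewrite -e big_nil expr0 mulr1].
have [u [hu ey]] := irr_form (hs 0%N isT); rewrite /= in ey.
have [w [hw ew]] : exists w, unit_in D w /\ \prod_(z <- s) z = w * p ^+ size s.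
  apply: IH; split=> // i hi; exact: (hs i.+1).
exists (u * w); split; first exact: unitM.
by rewrite -e big_cons ew ey /= exprS; ring.
Qed.

Lemma UFD_of_p : UFD D.
Proof.
split.
  move=> x hx hx0 hxu.
  have [u [n [hu e]]] := expo_dec hx hx0.
  case: n e => [|n] e; first by exfalso; apply: hxu; rewrite e expr0 mulr1.
  exists ((u * p) :: nseq n p); split.
    move=> [|i] hi /=; first exact: irr_up.
    rewrite nth_nseq; move: hi; rewrite /= size_nseq ltnS => ->.
    by rewrite -[p]mul1r; apply: irr_up; apply: unit1.
  by rewrite big_cons prod_nseq e exprS mulrA.
move=> s t x hs ht.
have [u [hu eu]] := fact_form hs.
have [w [hw ew]] := fact_form ht.
have hsz : size s = size t by apply: (expo_uniq hu hw); rewrite -eu -ew.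
split=> //; exists t; split=> // i hi.
have [a [ha ea]] := irr_form (proj1 hs i hi).
have hit : (i < size t)%N by rewrite -hsz.
have [b [hb eb]] := irr_form (proj1 ht i hit).
exists (a / b); split; first by apply: unitM sD ha (unitV hb).
by rewrite ea eb mulrA divfK //; case: hb.
Qed.

End UFDp.

Lemma same_sym (I J : L -> Prop) : same_set I J -> same_set J I.
Proof. by move=> h x; split => /h. Qed.

Lemma DnotV : exists z, [/\ D z, z != 0 & v z < 0].
Proof.
apply: NNPP => hn.
have DV : forall z, D z -> V z.
  move=> z hz; apply/Vv; case: (eqVneq z 0) => [->|hz0]; first by left.
  right; split=> //; rewrite leNgt; apply/negP => hlt; apply: hn; by exists z.
case: pR => [[hpD hpV] hp0 hpu hpr].
have hP : prime_ideal D (pid D pi).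
  split; first split; first exact: pid_ideal.
    move=> [d [hd e]].
    have ed : pi^-1 = d by apply: (mulfI hp0); rewrite mulfV // -e.
    apply: hpu; split; [by split | by [] | rewrite ed; split; [exact: hd | exact: DV]].
  move=> a b ha hb [d [hd e]].
  have : divides_in R pi (a * b) by exists d; split=> //; split=> //; apply: DV.
  by case/(hpr _ _ (conj ha (DV _ ha)) (conj hb (DV _ hb))) => [[c [[hc _] ec]]|[c [[hc _] ec]]];
    [left | right]; exists c.
apply: nU; apply: (UFD_of_p hpD hp0); apply: same_sym; apply: (prime_max hP).
by exists pi; split; [apply: pid_self | ].
Qed.

Lemma zM : exists z, [/\ M z, z != 0 & v z < 0].
Proof.
have [z0 [hz0 hz00 hvz0]] := DnotV.
have [m [hm hm0]] := Mnz.
case: (lerP 0 (v m)) => hvm.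
  exists (z0 ^+ (`|v m|%N.+1) * m); split.
  - by apply: idM Mid (srX _ sD hz0) hm.
  - by rewrite mulf_neq0 // expf_neq0.
  - rewrite vM ?expf_neq0 // vX //; nia.
by exists m.
Qed.

Lemma unitR u : unit_in D u -> v u = 0 -> unit_in R u.
Proof.
case=> h1 h2 h3 hv; split=> //; split=> //.
- by apply/(Vnz h2); rewrite hv.
- by apply/(Vnz _); rewrite ?invr_eq0 // vV // hv.
Qed.

Lemma unitR_inv u : unit_in R u -> unit_in D u /\ v u = 0.
Proof.
case=> [[h1 h2] h3 [h4 h5]]; split; first by split.
have hi : u^-1 != 0 by rewrite invr_eq0.
move/(Vnz h3): h2; move/(Vnz hi): h5; rewrite vV //; lia.
Qed.

Lemma piNM : ~ M pi.
Proof.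
move=> hMpi.
have [z [hz hz0 hvz]] := zM.
pose k := `|v z|%N.
have ek : v z = - (k%:Z) by rewrite /k; lia.
have hk : (0 < k)%N by rewrite /k; lia.
have hzD := MD hz.
have h1z : ~ M (1 + z).
  move=> h; apply: M1; rewrite -(addrK z 1); apply: idD Mid h _.
  by rewrite -mulN1r; apply: idM Mid _ hz; apply: srN sD (sr1 sD).
have [hsD hs0 hsD'] := notM_unit (srD sD (sr1 sD) hzD) h1z.
have hv1z : v (1 + z) = v z.
  have hlt : v z < v 1 by rewrite v1.
  by have [_ e] := vstrict hz0 (oner_neq0 L) hlt; rewrite addrC e.
pose s := (1 + z)^-1.
have hs0' : s != 0 by rewrite invr_eq0.
have hvs : v s = k%:Z by rewrite /s vV // hv1z ek opprK.
have hsR : R s by split=> //; apply/(Vnz hs0'); rewrite hvs.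
have hpk0 : pi ^+ k != 0 by rewrite expf_neq0 // pi0.
pose y := pi ^+ k * z.
have hy0 : y != 0 by rewrite mulf_neq0.
have hvy : v y = 0 by rewrite /y vM // vX ?pi0 // vpi ek; lia.
have hyR : R y by split; [apply: srM => //; apply: srX sD piD | apply/(Vnz hy0); rewrite hvy].
have hdiv : divides_in R pi (s * y).
  exists (s * pi ^+ k.-1 * z); split.
    have hc0 : s * pi ^+ k.-1 * z != 0 by rewrite !mulf_neq0 // expf_neq0 // pi0.
    split; first by apply: srM => //; apply: srM => //; apply: srX sD piD.
    apply/(Vnz hc0); rewrite !vM ?mulf_neq0 ?expf_neq0 ?pi0 // vX ?pi0 // vpi hvs ek; lia.
  have ek' : pi ^+ k = pi * pi ^+ k.-1 by rewrite -exprS prednK.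
  rewrite /y ek'; ring.
case: pR => _ _ _ hpr.
case: (hpr _ _ hsR hyR hdiv) => [[c [[hcD _] ec]] | [c [[hcD hcV] ec]]].
  apply: (unit_notM (unitV (notM_unit (srD sD (sr1 sD) hzD) h1z))).
  by rewrite -/s ec; apply: idMr Mid hcD hMpi.
have hc0 : c != 0 by apply/negP => /eqP h; move: hy0; rewrite ec h mulr0 eqxx.
have := vM pi0 hc0; rewrite -ec hvy vpi; move/(Vnz hc0): hcV; lia.
Qed.

Lemma piU : unit_in D pi.
Proof. exact: notM_unit piD piNM. Qed.

Lemma piiD : D pi^-1. Proof. by case: piU. Qed.

Lemma unitX (A : L -> Prop) x n : subring A -> unit_in A x -> unit_in A (x ^+ n).
Proof.
move=> sA hx; elim: n => [|n IH]; first by rewrite expr0; apply: unit1.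
by rewrite exprS; apply: unitM.
Qed.

Lemma norm_elt d : d != 0 -> exists e, [/\ unit_in D e, e != 0 & v (d * e) = 0].
Proof.
move=> hd; have hpi0 := pi0; case: (lerP 0 (v d)) => h.
  have hU : unit_in D (pi^-1 ^+ `|v d|%N) by apply: unitX sD (unitV piU).
  exists (pi^-1 ^+ `|v d|%N); split=> //; first by case: hU.
  by rewrite vM ?expf_neq0 ?invr_eq0 // vX ?invr_eq0 // vV // vpi; lia.
have hU : unit_in D (pi ^+ `|v d|%N) by apply: unitX sD piU.
exists (pi ^+ `|v d|%N); split=> //; first by case: hU.
by rewrite vM ?expf_neq0 // vX // vpi; lia.
Qed.

Lemma RQ d : D d -> exists n, R (pi ^+ n * d).
Proof.
move=> hd; exists `|v d|%N; split; first by apply: srM => //; apply: srX sD piD.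
case: (eqVneq d 0) => [->|hd0]; first by rewrite mulr0; apply: sr0 sV.
have hp : pi ^+ `|v d|%N != 0 by rewrite expf_neq0 ?pi0.
apply/(Vnz _); rewrite ?mulf_neq0 // vM // vX ?pi0 // vpi; lia.
Qed.

Lemma RP x : V x -> exists a b, [/\ R a, R b, b != 0, v b = 0 & x = a / b].
Proof.
move=> hx; case: (eqVneq x 0) => [->|hx0].
  exists 0, 1; split; rewrite ?mul0r ?oner_neq0 ?v1 //; try exact: sr0 sR; exact: sr1 sR.
have [a0 [b0 [ha0 hb0 hb00 e]]] := qD x.
have [f [hf hf0 hvf]] := norm_elt hb00.
have hfD : D f by case: hf.
exists (a0 * f), (b0 * f); split=> //.
- split; first exact: srM.
  have -> : a0 * f = x * (b0 * f) by rewrite e mulrA divfK.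
  have hb : b0 * f != 0 by rewrite mulf_neq0.
  apply/(Vnz _); rewrite ?mulf_neq0 // vM // hvf addr0; exact/(Vnz hx0).
- split; first exact: srM.
  by apply/(Vnz _); rewrite ?mulf_neq0 // hvf.
- by rewrite mulf_neq0.
- by rewrite e invfM mulrACA mulfV // mulr1.
Qed.

Definition Qi x := R x /\ M x.
Definition Pi x := R x /\ (x = 0 \/ (x != 0 /\ 0 < v x)).

Lemma RD x : R x -> D x. Proof. by case. Qed.
Lemma RV x : R x -> V x. Proof. by case. Qed.
Lemma Rv x : R x -> x != 0 -> 0 <= v x. Proof. by move=> [_ h] hx; apply/(Vnz hx). Qed.

Lemma Qideal : ideal R Qi.
Proof.
split.
- by move=> x [].
- by split; [apply: sr0 sR | apply: M0].
- by move=> x y [h1 h2] [h3 h4]; split; [apply: srD sR h1 h3 | apply: idD Mid h2 h4].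
- by move=> r x hr [h1 h2]; split; [apply: srM sR hr h1 | apply: idM Mid (RD hr) h2].
Qed.

Lemma Pideal : ideal R Pi.
Proof.
split.
- by move=> x [].
- by split; [apply: sr0 sR | left].
- move=> x y [h1 hx] [h3 hy]; split; first exact: srD sR h1 h3.
  case: hx => [->|[hx0 hx]]; first by rewrite add0r.
  case: hy => [->|[hy0 hy]]; first by rewrite addr0; right.
  case: (eqVneq (x + y) 0) => hxy; [by left | right; split=> //].
  have := vA hx0 hy0 hxy; rewrite ge_min; set p := v (x + y); set q := v x; set r := v y; case/orP => h; lia.
- move=> r x hr [h1 [->|[hx0 hx]]]; first by rewrite mulr0; split; [apply: sr0 sR | left].
  split; first exact: srM sR hr h1.
  case: (eqVneq r 0) => [->|hr0]; first by rewrite mul0r; left.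
  right; split; first by rewrite mulf_neq0.
  rewrite vM //; have := Rv hr hr0; lia.
Qed.

Lemma Q1 : ~ Qi 1. Proof. by case=> _; apply: M1. Qed.
Lemma P1 : ~ Pi 1.
Proof. by case=> _ [/eqP|[_]]; rewrite ?oner_eq0 // v1 ltxx. Qed.

Lemma notP x : R x -> ~ Pi x -> x != 0 /\ v x = 0.
Proof.
move=> hx hP; case: (eqVneq x 0) => [e|hx0]; first by exfalso; apply: hP; split=> //; left.
split=> //; have := Rv hx hx0; case: (ltrP 0 (v x)) => h1 h2; last lia.
by exfalso; apply: hP; split=> //; right.
Qed.

Lemma Rcomb a b : R a -> ~ M a -> R b -> ~ Pi b ->
  unit_in R a \/ unit_in R b \/ unit_in R (a + b).
Proof.
move=> ha hMa hb hPb.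
have [hb0 hvb] := notP hb hPb.
have hua := notM_unit (RD ha) hMa.
have ha0 : a != 0 by case: hua.
case: (eqVneq (v a) 0) => hva; first by left; apply: unitR.
have hva' : 0 < v a by have := Rv ha ha0; lia.
case: (classic (M b)) => hMb; last by right; left; apply: unitR => //; apply: notM_unit (RD hb) hMb.
right; right.
have hab : ~ M (a + b).
  move=> h; apply: hMa; rewrite -(addrK b a); apply: idD Mid h _.
  by rewrite -mulN1r; apply: idM Mid _ hMb; apply: srN sD (sr1 sD).
apply: unitR; first by apply: notM_unit hab; apply: srD sD (RD ha) (RD hb).
have hlt : v b < v a by rewrite hvb.
by have [_ e] := vstrict hb0 ha0 hlt; rewrite addrC e.
Qed.

Lemma unit_ideal (A I : L -> Prop) u : ideal A I -> unit_in A u -> I u -> I 1.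
Proof. by move=> hI [h1 h2 h3] hu; rewrite -(mulVf h2); apply: idM hI h3 hu. Qed.

Lemma proper_sub I : ideal R I -> ~ I 1 ->
  (forall x, I x -> Qi x) \/ (forall x, I x -> Pi x).
Proof.
move=> hI hI1; apply: NNPP => hn.
have [a [haI haQ]] : exists a, I a /\ ~ Qi a.
  apply: NNPP => h; apply: hn; left => x hx; apply: NNPP => hq; apply: h; by exists x.
have [b [hbI hbP]] : exists b, I b /\ ~ Pi b.
  apply: NNPP => h; apply: hn; right => x hx; apply: NNPP => hq; apply: h; by exists x.
have ha := id_sub hI haI; have hb := id_sub hI hbI.
have hMa : ~ M a by move=> h; apply: haQ.
case: (Rcomb ha hMa hb hbP) => [hu|[hu|hu]]; apply: hI1.
- exact: (unit_ideal hI hu haI).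
- exact: (unit_ideal hI hu hbI).
- exact: (unit_ideal hI hu (idD hI haI hbI)).
Qed.

Lemma tQ : exists t, Qi t /\ ~ Pi t.
Proof.
have [m [hm hm0]] := Mnz.
have [e [he he0 hve]] := norm_elt hm0.
have heD : D e by case: he.
have hme0 : m * e != 0 by rewrite mulf_neq0.
have hR : R (m * e) by split; [apply: srM => //; apply: MD | apply/(Vnz hme0); rewrite hve].
exists (m * e); split; first by split=> //; apply: idMr Mid heD hm.
by case=> _ [/eqP|[_]]; rewrite ?(negbTE hme0) // hve ltxx.
Qed.

Lemma piR : R pi. Proof. by split; [apply: piD | apply: piV]. Qed.

Lemma piP : Pi pi /\ ~ Qi pi.
Proof. split; last by case=> _; apply: piNM. by split; [apply: piR | right; rewrite pi0 vpi]. Qed.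

Lemma maxQ : maximal_ideal R Qi.
Proof.
split; first by split; [apply: Qideal | apply: Q1].
move=> J [hJ hJ1] sub x hx.
case: (proper_sub hJ hJ1) => h; first exact: h.
by exfalso; have [t [tQ' tP]] := tQ; apply: tP; apply: h; apply: sub.
Qed.

Lemma maxP : maximal_ideal R Pi.
Proof.
split; first by split; [apply: Pideal | apply: P1].
move=> J [hJ hJ1] sub x hx.
case: (proper_sub hJ hJ1) => h; last exact: h.
by exfalso; have [h1 h2] := piP; apply: h2; apply: h; apply: sub.
Qed.

Lemma max_only N : maximal_ideal R N -> same_set N Qi \/ same_set N Pi.
Proof.
move=> [[hN hN1] hmax].
case: (proper_sub hN hN1) => h; [left | right] => x; split; try exact: h.
  by apply: hmax => //; split; [apply: Qideal | apply: Q1].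
by apply: hmax => //; split; [apply: Pideal | apply: P1].
Qed.

Lemma sum_snoc (cs s : seq L) w y : size cs = size s ->
  \sum_(i < size (s ++ [:: y])) (cs ++ [:: w])`_i * (s ++ [:: y])`_i =
  \sum_(i < size s) cs`_i * s`_i + w * y.
Proof.
move=> hsz; rewrite size_cat /= addn1 big_ord_recr /=; congr (_ + _).
  by apply: eq_bigr => i _; rewrite !nth_cat hsz ltn_ord.
by rewrite !nth_cat hsz ltnn subnn.
Qed.

Lemma sum_map (c g : seq L) al k : size c = size g ->
  \sum_(i < size g) [seq al * ci | ci <- c]`_i * [seq k * gi | gi <- g]`_i =
  al * k * \sum_(i < size g) c`_i * g`_i.
Proof.
move=> hsz; rewrite mulr_sumr; apply: eq_bigr => i _.
rewrite (nth_map 0) ?hsz ?ltn_ord // (nth_map 0) ?ltn_ord //; ring.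
Qed.

Lemma size_mapc (c : seq L) al : size [seq al * ci | ci <- c] = size c.
Proof. by rewrite size_map. Qed.

Definition ext I : L -> Prop := fun x => D x /\ exists n, I (pi ^+ n * x).

Lemma piXR n : R (pi ^+ n). Proof. exact: srX sR piR. Qed.

Lemma ext_mono I x n m : ideal R I -> (n <= m)%N -> I (pi ^+ n * x) -> I (pi ^+ m * x).
Proof.
move=> hI hnm h; rewrite -(subnK hnm) exprD -mulrA; apply: idM hI (piXR _) h.
Qed.

Lemma ext_ideal I : ideal R I -> ideal D (ext I).
Proof.
move=> hI; split.
- by move=> x [].
- by split; [apply: sr0 sD | exists 0%N; rewrite mulr0; apply: id0 hI].
- move=> x y [hx [n hn]] [hy [m hm]]; split; first exact: srD.
  exists (n + m)%N; rewrite mulrDr; apply: (idD hI).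
    by apply: ext_mono hI _ hn; apply: leq_addr.
  by apply: ext_mono hI _ hm; apply: leq_addl.
- move=> r x hr [hx [n hn]]; split; first exact: srM.
  have [m hm] := RQ hr; exists (m + n)%N.
  have -> : pi ^+ (m + n) * (r * x) = (pi ^+ m * r) * (pi ^+ n * x) by rewrite exprD; ring.
  exact: idM hI hm hn.
Qed.

Lemma min_elt I : (exists y, I y /\ R y /\ y != 0) ->
  exists y, [/\ I y, R y, y != 0 & forall x, I x -> R x -> x != 0 -> v y <= v x].
Proof.
move=> [y0 [hy0 [hR0 hnz0]]].
suff : forall n y, (`|v y| <= n)%N -> I y -> R y -> y != 0 ->
  exists y, [/\ I y, R y, y != 0 & forall x, I x -> R x -> x != 0 -> v y <= v x].
  by move/(_ _ y0 (leqnn _)); apply.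
elim=> [|n IH] y hn hy hR hnz.
  exists y; split=> // x hx hxR hx0; have := Rv hxR hx0; lia.
case: (classic (exists x, [/\ I x, R x, x != 0 & v x < v y])) => [[x [hx hxR hx0 hlt]]|hno].
  apply: (IH x) => //; have := Rv hxR hx0; have := Rv hR hnz; lia.
exists y; split=> // x hx hxR hx0; rewrite leNgt; apply/negP => h; apply: hno; by exists x.
Qed.

Lemma noethR : noetherian R.
Proof.
move=> I hI.
case: (classic (exists y, I y /\ R y /\ y != 0)) => hex; last first.
  exists [::]; split=> // x; split.
    move=> hx; exists [::]; split=> //; rewrite big_ord0.
    apply: NNPP => hx0; apply: hex; exists x; split=> //; split=> //; last by apply/eqP.
    exact: id_sub hI hx.
  by move=> [c [_ _ ->]]; rewrite big_ord0; apply: id0 hI.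
have [y [hyI hyR hy0 hymin]] := min_elt hex.
have [g [hgD hgen]] := nD (ext_ideal hI).
have [N HN] : exists N, forall i, (i < size g)%N -> I (pi ^+ N * g`_i).
  apply: (@bound_nat (fun n i => I (pi ^+ n * g`_i))); first by move=> n m i; apply: ext_mono.
  by move=> i hi; have [_ [n hn]] := gen_mem sD hgen hi; exists n.
pose h := [seq pi ^+ N * gi | gi <- g] ++ [:: y].
have hh : forall i, (i < size h)%N -> I h`_i.
  move=> i; rewrite /h size_cat size_map /= addn1 ltnS leq_eqVlt => /orP [/eqP ->|hi].
    by rewrite nth_cat size_map ltnn subnn.
  by rewrite nth_cat size_map hi (nth_map 0) //; apply: HN.
exists h; split; first by move=> i hi; apply: id_sub hI (hh i hi).
move=> x; split; last first.
  by move=> [c [hsz hc ->]]; apply: id_sum hI _ _ => i hi; [apply: hc; rewrite hsz | apply: hh].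
move=> hx.
have hxR := id_sub hI hx.
have : ext I x by split; [apply: RD | exists 0%N; rewrite expr0 mul1r].
move/hgen => [c [hcsz hcD ex]].
have [m Hm] : exists m, forall i, (i < size g)%N -> R (pi ^+ m * c`_i).
  apply: (@bound_nat (fun n i => R (pi ^+ n * c`_i))).
    move=> n m' i hnm h1; rewrite -(subnK hnm) exprD -mulrA; apply: srM sR (piXR _) h1.
  by move=> i hi; apply: RQ; apply: hcD; rewrite hcsz.
have [a' [b' [ha' hb' hb'0 hvb' eab]]] : exists a' b', [/\ R a', R b', b' != 0, v b' = 0 & b' * x = a' * y].
  case: (eqVneq x 0) => [->|hx0].
    by exists 0, 1; split; rewrite ?mulr0 ?mul0r ?v1 ?oner_neq0 //; [apply: sr0 sR | apply: sr1 sR].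
  have hq : V (x / y).
    apply/(Vnz _); first by rewrite mulf_neq0 ?invr_eq0.
    by rewrite vDiv //; have := hymin x hx hxR hx0; lia.
  have [a [b [ha hb hb0 hvb e]]] := RP hq.
  exists a, b; split=> //.
  by rewrite -[x](divfK hy0) e mulrA mulrCA divff // mulr1.
pose be := pi ^+ (m + N).
have hbe : R be by apply: piXR.
have hbeM : ~ M be by apply: unit_notM; apply: unitX sD piU.
have hb'P : ~ Pi b' by case=> _ [/eqP|[_]]; rewrite ?(negbTE hb'0) // hvb' ltxx.
have [la [mu [hla hmu elm]]] : exists la mu, [/\ R la, R mu & la * be + mu * b' = 1].
  case: (Rcomb hbe hbeM hb' hb'P) => [[h1 h2 h3]|[[h1 h2 h3]|[h1 h2 h3]]].
  - by exists be^-1, 0; split; rewrite ?mul0r ?addr0 ?mulVf //; apply: sr0 sR.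
  - by exists 0, b'^-1; split; rewrite ?mul0r ?add0r ?mulVf //; apply: sr0 sR.
  - by exists (be + b')^-1, (be + b')^-1; split; rewrite // -mulrDr mulVf.
exists ([seq la * ci | ci <- [seq pi ^+ m * ci | ci <- c]] ++ [:: mu * a']); split.
- by rewrite /h !size_cat !size_map hcsz.
- move=> i; rewrite size_cat !size_map /= addn1 ltnS leq_eqVlt => /orP [/eqP ->|hi].
    by rewrite nth_cat !size_map hcsz ltnn subnn /=; apply: srM sR hmu ha'.
  rewrite nth_cat !size_map hi (nth_map 0) ?size_map // (nth_map 0) //.
  by apply: srM sR hla _; apply: Hm; rewrite -hcsz.
rewrite /h sum_snoc; last by rewrite !size_map hcsz.
have e1 : \sum_(i < size [seq pi ^+ N * gi | gi <- g])
     [seq la * ci | ci <- [seq pi ^+ m * ci | ci <- c]]`_i * [seq pi ^+ N * gi | gi <- g]`_i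
   = la * be * x.
  rewrite size_map.
  transitivity (\sum_(i < size g) [seq la * pi ^+ m * ci | ci <- c]`_i * [seq pi ^+ N * gi | gi <- g]`_i).
    apply: eq_bigr => i _; rewrite !(nth_map 0) ?size_map ?hcsz ?ltn_ord //; ring.
  by rewrite sum_map // -ex /be exprD; ring.
rewrite e1; have -> : mu * a' * y = mu * (b' * x) by rewrite eab mulrA.
have -> : la * be * x + mu * (b' * x) = (la * be + mu * b') * x by ring.
by rewrite elm mul1r.
Qed.

Lemma max_same (A I J : L -> Prop) : same_set I J -> maximal_ideal A J -> maximal_ideal A I.
Proof.
move=> hs [[[h1 h2 h3 h4] h5] h6]; split.
  split; last by move/hs.
  split.
  - by move=> x /hs; apply: h1.
  - by apply/hs.
  - by move=> x y /hs hx /hs hy; apply/hs; apply: h3.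
  - by move=> r x hr /hs hx; apply/hs; apply: h4.
move=> K hK sub x Kx; apply/hs; apply: (h6 K hK) => // y /hs; apply: sub.
Qed.

Lemma primeX (A I : L -> Prop) x n : subring A -> prime_ideal A I -> A x -> I (x ^+ n) -> (0 < n)%N -> I x.
Proof.
move=> sA [[hI hI1] hpr] hx; elim: n => // n IH hn _.
case: n IH hn => [|n] IH hn; first by rewrite expr1 in hn.
rewrite exprS in hn; case: (hpr _ _ hx (srX _ sA hx) hn) => // h; exact: IH.
Qed.

Lemma primeQ : prime_ideal R Qi.
Proof.
split; first by split; [apply: Qideal | apply: Q1].
move=> a b ha hb [_ hab].
case: (classic (M a)) => hMa; first by left.
right; split=> //.
have [h1 h2 h3] := notM_unit (RD ha) hMa.
by rewrite -(mulKf h2 b); apply: idM Mid h3 hab.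
Qed.

Lemma primeP : prime_ideal R Pi.
Proof.
split; first by split; [apply: Pideal | apply: P1].
move=> a b ha hb [hab [e|[hab0 hv]]].
  by move/eqP: e; rewrite mulf_eq0 => /orP [/eqP ea|/eqP eb]; [left|right]; split=> //; left.
have ha0 : a != 0 by apply: contraNneq hab0 => ->; rewrite mul0r.
have hb0 : b != 0 by apply: contraNneq hab0 => ->; rewrite mulr0.
rewrite vM // in hv; have := Rv ha ha0; have := Rv hb hb0 => h1 h2.
case: (ltrP 0 (v a)) => h3; first by left; split=> //; right.
by right; split=> //; right; split=> //; lia.
Qed.

Lemma dimR : dim_one R.
Proof.
split.
  exists Pi; split; first exact: primeP.
  by exists pi; split; [apply: (proj1 piP) | apply: pi0].
move=> P'' hP [c [hc hc0]].
have [[hPi hP1] hpr] := hP.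
case: (proper_sub hPi hP1) => sub.
-
  have hpn : forall n, ~ P'' (pi ^+ n).
    by move=> n /sub [_] /unit_notM; apply; apply: unitX sD piU.
  have hJ : prime_ideal D (ext P'').
    split; first split; first exact: ext_ideal.
      by move=> [_ [n hn]]; apply: (hpn n); rewrite mulr1 in hn.
    move=> a b ha hb [_ [n hn]].
    have [m1 hm1] := RQ ha; have [m2 hm2] := RQ hb.
    have : P'' (pi ^+ n * ((pi ^+ m1 * a) * (pi ^+ m2 * b))).
      have -> : pi ^+ n * ((pi ^+ m1 * a) * (pi ^+ m2 * b)) = pi ^+ (m1 + m2) * (pi ^+ n * (a * b))
        by rewrite exprD; ring.
      by apply: idM hPi (piXR _) hn.
    case/(hpr _ _ (piXR _) (srM sR hm1 hm2)) => [/hpn//|].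
    by case/(hpr _ _ hm1 hm2) => h; [left | right]; split=> //; [exists m1 | exists m2].
  have hJM := prime_max hJ (ex_intro _ c (conj (conj (RD (id_sub hPi hc)) (ex_intro _ 0%N (eq_ind_r P'' hc (mul1r c)))) hc0)).
  apply: (max_same _ maxQ) => x; split; first exact: sub.
  move=> [hxR hMx]; have [_ [n hn]] := proj2 (hJM x) hMx.
  by case: (hpr _ _ (piXR n) hxR hn) => // /hpn.
-
  have [hcR [e|[_ hvc]]] := sub c hc; first by move: hc0; rewrite e eqxx.
  pose k := `|v c|%N.
  have ek : v c = k%:Z by rewrite /k; lia.
  apply: (max_same _ maxP) => x; split; first exact: sub.
  move=> [hxR [->|[hx0 hvx]]]; first exact: id0 hPi.
  have hxk0 : x ^+ k != 0 by rewrite expf_neq0.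
  have hq : V (x ^+ k / c).
    apply/(Vnz _); first by rewrite mulf_neq0 ?invr_eq0.
    rewrite vDiv // vX // ek; nia.
  have [a [b [ha hb hb0 hvb e]]] := RP hq.
  have hbx : P'' (b * x ^+ k).
    have -> : b * x ^+ k = a * c by rewrite -[x ^+ k](divfK hc0) e; field.
    exact: idM hPi ha hc.
  case: (hpr _ _ hb (srX _ sR hxR) hbx) => h.
    by case: (sub b h) => _ [/eqP|[_]]; rewrite ?(negbTE hb0) // hvb ltxx.
  by apply: (primeX sR hP hxR h); rewrite /k; lia.
Qed.

Lemma fact_cat (A : L -> Prop) s t x y : factorization A s x -> factorization A t y ->
  factorization A (s ++ t) (x * y).
Proof.
move=> [hs ex] [ht ey]; split; last by rewrite big_cat ex ey.
move=> i hi; rewrite nth_cat; case: ltnP => h1; first exact: hs.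
by apply: ht; rewrite -(ltn_add2l (size s)) subnKC // -size_cat.
Qed.

Lemma fact1 (A : L -> Prop) x : irreducible_in A x -> factorization A [:: x] x.
Proof. by move=> h; split; [case | rewrite big_seq1]. Qed.

Lemma unit_of_inv (A : L -> Prop) z c : A z -> A c -> z * c = 1 -> unit_in A z.
Proof.
move=> hz hc e; have hz0 : z != 0 by apply: contra_eq_neq e => ->; rewrite mul0r eq_sym oner_neq0.
split=> //; rewrite (_ : z^-1 = c) //; apply: (mulfI hz0); by rewrite mulfV.
Qed.

Lemma atomR : atomic R.
Proof.
move=> x0 hx0 hx00 hxu0; apply: NNPP => hbad0.
pose F := fun I => exists x, [/\ R x, x != 0, ~ unit_in R x, ~ (exists s, factorization R s x) & I = pid R x].
have [I [[x [hx hxn hxu hbad eI]] hmax]] : exists I, F I /\ forall J, F J -> (forall y, I y -> J y) -> forall y, J y -> I y.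
  apply: noeth_max sR noethR _ _; first by move=> I [x [hx _ _ _ ->]]; apply: pid_ideal sR hx.
  by exists (pid R x0), x0.
subst I.
have key : forall y z, R y -> R z -> x = y * z -> ~ unit_in R y -> ~ unit_in R z -> ~ (exists s, factorization R s y) -> False.
  move=> y z hy hz e hyu hzu hyb.
  have hy0 : y != 0 by apply: contraNneq hxn => h; rewrite e h mul0r.
  have FJ : F (pid R y) by exists y.
  have sub : forall w, pid R x w -> pid R y w.
    by move=> w [d [hd ->]]; exists (z * d); split; [apply: srM sR hz hd | rewrite e mulrA].
  have [c [hc ec]] := hmax _ FJ sub y (pid_self _ sR).
  apply: hzu; apply: (unit_of_inv hz hc); apply: (mulfI hy0); by rewrite mulr1 mulrA -e -ec.
have : ~ irreducible_in R x by move/fact1 => h; apply: hbad; exists [:: x].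
move=> hni.
have [a [b [ha hb e hnu]]] : exists a b, [/\ R a, R b, x = a * b & ~ (unit_in R a \/ unit_in R b)].
  apply: NNPP => hn; apply: hni; split=> // a b ha hb e; apply: NNPP => h; apply: hn; by exists a, b.
have hau : ~ unit_in R a by move=> h; apply: hnu; left.
have hbu : ~ unit_in R b by move=> h; apply: hnu; right.
case: (classic (exists s, factorization R s a)) => [[sa hsa]|hna]; last exact: (key a b).
case: (classic (exists s, factorization R s b)) => [[sb hsb]|hnb]; last first.
  by apply: (key b a) => //; rewrite mulrC.
by apply: hbad; exists (sa ++ sb); rewrite e; apply: fact_cat.
Qed.

Lemma pid_prime p : prime_elt R p -> prime_ideal R (pid R p).
Proof.
case=> hp hp0 hpu hpr; split; first split; first exact: pid_ideal sR hp.
  by move=> [d [hd e]]; apply: hpu; apply: (unit_of_inv hp hd); rewrite -e.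
by move=> a b ha hb hab; case: (hpr _ _ ha hb hab) => [[c [hc ec]]|[c [hc ec]]]; [left|right]; exists c.
Qed.

Lemma prime_uniq p : prime_elt R p -> assoc_in R p pi.
Proof.
move=> hpp; have hP := pid_prime hpp.
have [hp hp0 hpu _] := hpp.
have hmax : maximal_ideal R (pid R p).
  by case: dimR => _; apply => //; exists p; split=> //; apply: pid_self sR.
case: (max_only hmax) => hs.
  exfalso; apply: nU; apply: (UFD_of_p (RD hp) hp0) => x; split.
    move=> hMx; have [n hn] := RQ (MD hMx).
    have [c [hc ec]] : pid R p (pi ^+ n * x).
      by apply/hs; split=> //; apply: idM Mid (RD (piXR n)) hMx.
    exists (c * pi^-1 ^+ n); split; first by apply: srM sD (RD hc) (srX _ sD piiD).
    rewrite mulrA -ec mulrAC exprVn mulfV ?mul1r //; by rewrite expf_neq0 ?pi0.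
  move=> [d [hd ->]]; have [_ hMp] := proj1 (hs p) (pid_self p sR).
  by apply: idMr Mid hd hMp.
have [c [hc ec]] : pid R p pi by apply/hs; apply: (proj1 piP).
have [_ [e|[_ hvp]]] := proj1 (hs p) (pid_self p sR); first by move: hp0; rewrite e eqxx.
have hd0 : p / pi != 0 by rewrite mulf_neq0 ?invr_eq0 ?pi0.
have hdR : R (p / pi).
  split; first by apply: srM sD (RD hp) piiD.
  by apply/(Vnz hd0); rewrite vDiv ?pi0 // vpi; lia.
exists (p / pi); split; last by rewrite divfK ?pi0.
apply: (unit_of_inv hdR hc); apply: (mulfI pi0); rewrite mulr1 {2}ec; field.
have hc0 : c != 0 by apply: contraNneq pi0 => h; rewrite ec h mulr0.
by rewrite hc0 hp0.
Qed.

Lemma radM r w : M r -> D w -> w != 0 -> exists k d, D d /\ r ^+ k = w * d.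
Proof.
move=> hr hw hw0; apply: NNPP => hn.
pose F := fun I => [/\ ideal D I, I w & forall k, ~ I (r ^+ k)].
have [I [[hI hIw hIr] hmax]] : exists I, F I /\ forall J, F J -> (forall y, I y -> J y) -> forall y, J y -> I y.
  apply: noeth_max sD nD _ _; first by move=> I [].
  exists (pid D w); split; [exact: pid_ideal | exact: pid_self |].
  by move=> k [d [hd e]]; apply: hn; exists k, d.
have ext_a : forall a, D a -> ~ I a -> exists k i d, [/\ I i, D d & r ^+ k = i + a * d].
  move=> a ha hIa; apply: NNPP => hne.
  pose Ia := fun x => exists i d, [/\ I i, D d & x = i + a * d].
  have hIa' : ideal D Ia.
    split.
    - by move=> x [i [d [hi hd ->]]]; apply: srD sD (id_sub hI hi) (srM sD ha hd).
    - by exists 0, 0; split; rewrite ?mulr0 ?addr0 //; [apply: id0 hI | apply: sr0 sD].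
    - move=> x y [i [d [hi hd ->]]] [j [f [hj hf ->]]]; exists (i + j), (d + f); split.
      + exact: idD hI hi hj.
      + exact: srD.
      + by rewrite mulrDr; ring.
    - move=> q x hq [i [d [hi hd ->]]]; exists (q * i), (q * d); split.
      + exact: idM hI hq hi.
      + exact: srM.
      + by rewrite mulrDr mulrCA.
  have sub : forall y, I y -> Ia y by move=> y hy; exists y, 0; split; rewrite ?mulr0 ?addr0 //; apply: sr0 sD.
  have FIa : F Ia.
    split=> //; first exact: sub.
    by move=> k [i [d [hi hd e]]]; apply: hne; exists k, i, d.
  apply: hIa; apply: (hmax _ FIa sub); exists 0, 1; split; rewrite ?add0r ?mulr1 //; [apply: id0 hI | apply: sr1 sD].
have hprime : prime_ideal D I.
  split; first by split=> //; move: (hIr 0%N); rewrite expr0.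
  move=> a b ha hb hab; apply: NNPP => hn2.
  have hIa : ~ I a by move=> h; apply: hn2; left.
  have hIb : ~ I b by move=> h; apply: hn2; right.
  have [k1 [i1 [d1 [hi1 hd1 e1]]]] := ext_a a ha hIa.
  have [k2 [i2 [d2 [hi2 hd2 e2]]]] := ext_a b hb hIb.
  apply: (hIr (k1 + k2)%N).
  have -> : r ^+ (k1 + k2) = i1 * (i2 + b * d2) + i2 * (a * d1) + (a * b) * (d1 * d2).
    by rewrite exprD e1 e2; ring.
  apply: (idD hI); first apply: (idD hI).
  - by apply: (idMr hI _ hi1); apply: srD sD (id_sub hI hi2) (srM sD hb hd2).
  - by apply: (idMr hI _ hi2); apply: srM sD ha hd1.
  - by apply: (idMr hI _ hab); apply: srM sD hd1 hd2.
have := prime_max hprime (ex_intro _ w (conj hIw hw0)).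
by move=> hs; apply: (hIr 1%N); rewrite expr1; apply/hs.
Qed.

Lemma prod_assoc r (s : seq L) : (forall i, (i < size s)%N -> assoc_in R s`_i r) ->
  exists u, unit_in R u /\ \prod_(y <- s) y = u * r ^+ size s.
Proof.
elim: s => [|y s IH] h; first by exists 1; split; [apply: unit1 sR | rewrite big_nil expr0 mulr1].
have [u [hu eu]] := h 0%N isT.
have [w [hw ew]] := IH (fun i hi => h i.+1 hi).
exists (u * w); split; first exact: unitM sR hu hw.
rewrite /= in eu; by rewrite big_cons ew eu /= exprS; ring.
Qed.

Lemma div_abs r k x y : abs_irreducible R r -> R x -> R y -> x * y = r ^+ k ->
  exists u j, unit_in R u /\ x = u * r ^+ j.
Proof.
move=> [hirr habs] hx hy e.
have [hr hr0 _ _] := hirr.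
have hrk0 : r ^+ k != 0 by rewrite expf_neq0.
have hx0 : x != 0 by apply: contraNneq hrk0 => h; rewrite -e h mul0r.
have hy0 : y != 0 by apply: contraNneq hrk0 => h; rewrite -e h mulr0.
case: (classic (unit_in R x)) => hxu; first by exists x, 0%N; rewrite expr0 mulr1.
case: (classic (unit_in R y)) => hyu.
  exists y^-1, k; split; first exact: unitV.
  by rewrite -e mulrC mulfK //; case: hyu.
have [sx hsx] := atomR hx hx0 hxu.
have [sy hsy] := atomR hy hy0 hyu.
have hf := fact_cat hsx hsy; rewrite e in hf.
have [hsz [t' [hperm hass]]] := habs k _ hf.
have Ht : forall i, (i < size t')%N -> t'`_i = r.
  move=> i hi; have := mem_nth 0 hi; rewrite -(perm_mem hperm) => /nseqP [] //.
have hszt : size t' = size (sx ++ sy) by rewrite -(perm_size hperm) size_nseq hsz size_nseq.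
have [u [hu eu]] : exists u, unit_in R u /\ \prod_(z <- sx) z = u * r ^+ size sx.
  apply: prod_assoc => i hi.
  have hi' : (i < size (sx ++ sy))%N by rewrite size_cat ltn_addr.
  have := hass i hi'; rewrite nth_cat hi Ht // hszt //.
exists u, (size sx); split=> //; rewrite -eu; by case: hsx.
Qed.

Lemma nonabs r : irreducible_in R r -> ~ assoc_in R r pi -> ~ abs_irreducible R r.
Proof.
move=> hirr hna habs.
have [hr hr0 hru hrirr] := hirr.
have hrP : ~ Pi r.
  move=> [_ [e|[_ hvr]]]; first by move: hr0; rewrite e eqxx.
  have hd0 : r / pi != 0 by rewrite mulf_neq0 ?invr_eq0 ?pi0.
  have hdR : R (r / pi).
    split; first by apply: srM sD (RD hr) piiD.
    by apply/(Vnz hd0); rewrite vDiv ?pi0 // vpi; lia.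
  have e : r = pi * (r / pi) by rewrite mulrC divfK ?pi0.
  case: (hrirr _ _ piR hdR e) => h; first by case: pR => _ _ /(_ h).
  by apply: hna; exists (r / pi); split=> //; rewrite mulrC.
have [_ hvr] := notP hr hrP.
have hMr : M r.
  apply: NNPP => h; apply: hru; apply: unitR => //; exact: notM_unit (RD hr) h.
have claim : forall w, D w -> w != 0 -> exists u j, unit_in D u /\ w = u * r ^+ j.
  move=> w hw hw0.
  have [k [d [hd ek]]] := radM hMr hw hw0.
  have [e [he he0 hve]] := norm_elt hw0.
  have heD : D e by case: he.
  have hx0 : w * e != 0 by rewrite mulf_neq0.
  have hxR : R (w * e) by split; [apply: srM | apply/(Vnz hx0); rewrite hve].
  have hrk0 : r ^+ k != 0 by rewrite expf_neq0.
  have hd0 : d != 0 by apply: contraNneq hrk0 => h; rewrite ek h mulr0.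
  have hy0 : d / e != 0 by rewrite mulf_neq0 ?invr_eq0.
  have exy : (w * e) * (d / e) = r ^+ k by rewrite ek; field.
  have hyR : R (d / e).
    have heiD : D e^-1 by case: he.
    split; first exact: srM sD hd heiD.
    apply/(Vnz hy0); have := vM hx0 hy0; rewrite exy vX // hvr mul0r hve; lia.
  have [u [j [hu eu]]] := div_abs habs hxR hyR exy.
  have [huD _] := unitR_inv hu.
  exists (u / e), j; split; first exact: (unitM sD huD (unitV he)).
  by rewrite -[w](mulfK he0) eu; ring.
apply: nU; apply: (UFD_of_p (RD hr) hr0) => x; split.
  move=> hMx; case: (eqVneq x 0) => [->|hx0].
    by exists 0; split; [apply: sr0 sD | rewrite mulr0].
  have [u [j [hu eu]]] := claim x (MD hMx) hx0.
  case: j eu => [|j] eu.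
    by exfalso; apply: (unit_notM hu); rewrite -[u]mulr1 -(expr0 r) -eu.
  exists (u * r ^+ j); split; first by apply: srM sD (let: And3 h _ _ := hu in h) (srX _ sD (RD hr)).
  by rewrite eu exprS; ring.
by move=> [d [hd ->]]; apply: idMr Mid hd hMr.
Qed.

End Main.

Unset Implicit Arguments.
Theorem mainTheorem7 (L : fieldType) (D V : L -> Prop) (pi : L) :
  subring D -> subring V ->
  quotient_field_is D -> quotient_field_is V ->
  noetherian D -> local_ring D -> dim_one D ->
  noetherian V -> local_ring V -> dim_one V ->
  (* (a) *) DVR_of V ->
  (* (b) *) prime_elt V pi -> prime_elt (capS D V) pi ->
  (* (c) *) (forall N, maximal_ideal (int_closure D) N ->
             independent (localization (int_closure D) N) V) ->
  (* (d) *) ~ UFD D ->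
  (* (e) *) (exists a b, [/\ irreducible_in D a, irreducible_in D b,
                            irreducible_in (capS D V) a, irreducible_in (capS D V) b &
                            ~ assoc_in D a b]) ->
  let R := capS D V in
  [/\ noetherian R /\ dim_one R /\ atomic R,
      (exists M1 M2, [/\ maximal_ideal R M1, maximal_ideal R M2, ~ same_set M1 M2 &
         forall M, maximal_ideal R M -> same_set M M1 \/ same_set M M2]),
      prime_elt R pi /\ (forall p, prime_elt R p -> assoc_in R p pi),
      (exists r, irreducible_in R r /\ ~ assoc_in R r pi) &
      (forall r, irreducible_in R r -> ~ assoc_in R r pi -> ~ abs_irreducible R r)].
Proof.
move=> sD sV qD qV nD [M [Mmax Muniq]] dD nV lV dV [v [vM vA vS Vv]] pV pR _ nU
  [a [b [_ _ ha hb hab]]] R.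
split.
- split; first exact: (noethR sD sV qD nD Mmax Muniq dD vM vA vS Vv pV pR nU).
  split; first exact: (dimR sD sV qD nD Mmax Muniq dD vM vA vS Vv pV pR nU).
  exact: (atomR sD sV qD nD Mmax Muniq dD vM vA vS Vv pV pR nU).
- exists (Qi D V M), (Pi D V v); split.
  + exact: (maxQ sD sV qD nD Mmax Muniq dD vM vA vS Vv pV pR nU).
  + exact: (maxP sD sV qD nD Mmax Muniq dD vM vA vS Vv pV pR nU).
  + move=> hs; have [t [htQ htP]] := tQ sD sV qD nD Mmax Muniq dD vM vA vS Vv pV pR nU.
    by apply: htP; apply/hs.
  + exact: (max_only sD sV qD nD Mmax Muniq dD vM vA vS Vv pV pR nU).
- split=> //; exact: (prime_uniq sD sV qD nD Mmax Muniq dD vM vA vS Vv pV pR nU).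
- case: (classic (assoc_in R a pi)) => hapi; last by exists a.
  case: (classic (assoc_in R b pi)) => hbpi; last by exists b.
  exfalso; apply: hab.
  have [u [hu eu]] := hapi; have [w [hw ew]] := hbpi.
  have [hwR hw0 hwi] := hw.
  exists (u / w); split.
    have [[hu1 _] hu2 [hu3 _]] := hu; have [[hw1 _] _ [hw3 _]] := hw.
    split; [exact: srM sD hu1 hw3 | by rewrite mulf_neq0 ?invr_eq0 |].
    by rewrite invfM invrK; apply: srM sD hu3 hw1.
  by rewrite eu ew mulrA divfK.
- exact: (nonabs sD sV qD nD Mmax Muniq dD vM vA vS Vv pV pR nU).
Qed.
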